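(* Let $V_1\subseteq\mathbb{F}[\mathbf{y}]$ and $V_2\subseteq\mathbb{F}[\mathbf{z}]$ be finite-dimensional vector spaces of polynomials over disjoint sets of variables $\mathbf{y},\mathbf{z}$. Suppose $\mathrm{wt}_1:\mathbf{y}\to\mathbb{N}^k$ and $\mathrm{wt}_2:\mathbf{z}\to\mathbb{N}^k$ are BIWAs for $V_1$ and $V_2$ isolating bases (monomial index sets) $B_1$ and $B_2$ respectively, and let $w:\mathbf{y}\cup\mathbf{z}\to\mathbb{N}$ be a weight assignment that separates $B_1\cdot B_2=\{m_1m_2:m_1\in B_1,m_2\in B_2\}$. Define $\mathrm{wt}:\mathbf{y}\cup\mathbf{z}\to\mathbb{N}^{k+1}$ by $\mathrm{wt}(y_i)=(\mathrm{wt}_1(y_i),w(y_i))$ for $y_i\in\mathbf{y}$ and $\mathrm{wt}(z_i)=(\mathrm{wt}_2(z_i),w(z_i))$ for $z_i\in\mathbf{z}$. Then $\mathrm{wt}$ is a BIWA for $V_1\cdot V_2=\operatorname{span}\{fg:f\in V_1,g\in V_2\}$ (isolating $B_1\cdot B_2$).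
   Context: A weight assignment $\mathrm{wt}:\mathbf{y}\to\mathbb{N}^k$ is extended to monomials additively: $\mathrm{wt}(\prod_i y_i^{e_i})=\sum_ie_i\,\mathrm{wt}(y_i)$. A weight assignment separates a set $S$ of monomials if distinct monomials in $S$ get distinct weights. For a finite-dimensional space $V$ of polynomials, regard $V$ as a matrix whose rows are coefficient vectors of a spanning set and whose columns are indexed by monomials; $V_m$ is the column of monomial $m$. $\mathrm{wt}$ is a BIWA for $V$ isolating $B$ if $B$ is a set of monomials whose columns form a basis of the column space, distinct elements of $B$ have distinct weights, and for every monomial $m\notin B$, $V_m\in\operatorname{span}\{V_{m'}:m'\in B,\ \mathrm{wt}(m')\prec\mathrm{wt}(m)\}$, with $\prec$ the lexicographic order. *)

(* Defs.v *)
From HB Require Import structures.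
From mathcomp Require Import all_boot all_order all_algebra.
Set Implicit Arguments. Unset Strict Implicit. Unset Printing Implicit Defensive.
Import GRing.Theory.
Local Open Scope ring_scope.

Definition mon (X : finType) := {ffun X -> nat}.
Definition mon1 (X : finType) : mon X := [ffun=> 0%N].
Definition monmul (X : finType) (a b : mon X) : mon X := [ffun x => (a x + b x)%N].

(* Polynomials over F in variables X: a finite formal sum of terms c * monomial. *)
Definition mpoly (F : fieldType) (X : finType) := seq (F * mon X).
Definition coef (F : fieldType) (X : finType) (p : mpoly F X) (m : mon X) : F :=
  \sum_(t <- p | t.2 == m) t.1.
Definition mulp (F : fieldType) (X : finType) (p q : mpoly F X) : mpoly F X :=
  [seq (a.1 * b.1, monmul a.2 b.2) | a <- p, b <- q].

Definition monl (n m : nat) (a : mon 'I_n) : mon ('I_n + 'I_m)%type :=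
  [ffun v => match v with inl i => a i | inr _ => 0%N end].
Definition monr (n m : nat) (b : mon 'I_m) : mon ('I_n + 'I_m)%type :=
  [ffun v => match v with inl _ => 0%N | inr j => b j end].
Definition polyl (F : fieldType) (n m : nat) (p : mpoly F 'I_n) : mpoly F ('I_n + 'I_m)%type :=
  [seq (t.1, monl m t.2) | t <- p].
Definition polyr (F : fieldType) (n m : nat) (p : mpoly F 'I_m) : mpoly F ('I_n + 'I_m)%type :=
  [seq (t.1, monr n t.2) | t <- p].

Definition monwt1 (X : finType) (w : X -> nat) (a : mon X) : nat :=
  (\sum_(x : X) a x * w x)%N.
Definition monwt (X : finType) (k : nat) (wt : X -> 'I_k -> nat) (a : mon X)
  : {ffun 'I_k -> nat} := [ffun c => monwt1 (fun x => wt x c) a].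

Definition lexlt (k : nat) (u v : {ffun 'I_k -> nat}) : bool :=
  [exists i : 'I_k, (u i < v i)%N && [forall j : 'I_k, (j < i)%N ==> (u j == v j)]].

(* Column V_m of the matrix of a spanning set s (rows = coefficient vectors). *)
Definition colv (F : fieldType) (X : finType) (s : seq (mpoly F X)) (m : mon X)
  : 'rV[F]_(size s) := \row_(i < size s) coef (nth [::] s i) m.
Definition Bmx (F : fieldType) (X : finType) (s : seq (mpoly F X)) (B : seq (mon X))
  : 'M[F]_(size B, size s) := \matrix_(i < size B) colv s (nth (mon1 X) B i).
Definition Bmx_below (F : fieldType) (X : finType) (k : nat) (wt : X -> 'I_k -> nat)
  (s : seq (mpoly F X)) (B : seq (mon X)) (u : {ffun 'I_k -> nat})
  : 'M[F]_(size B, size s) :=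
  \matrix_(i < size B)
    (if lexlt (monwt wt (nth (mon1 X) B i)) u then colv s (nth (mon1 X) B i) else 0).

Definition isBIWA (F : fieldType) (X : finType) (k : nat) (s : seq (mpoly F X))
  (wt : X -> 'I_k -> nat) (B : seq (mon X)) : Prop :=
  [/\ row_free (Bmx s B),
      (forall m : mon X, (colv s m <= Bmx s B)%MS),
      {in B &, forall b1 b2, monwt wt b1 = monwt wt b2 -> b1 = b2} &
      (forall m : mon X, m \notin B -> (colv s m <= Bmx_below wt s B (monwt wt m))%MS)].

Definition separates (X : finType) (w : X -> nat) (S : seq (mon X)) : Prop :=
  {in S &, forall a b, monwt1 w a = monwt1 w b -> a = b}.

Definition prodB (n m : nat) (B1 : seq (mon 'I_n)) (B2 : seq (mon 'I_m))
  : seq (mon ('I_n + 'I_m)%type) := [seq monmul (monl m a) (monr n b) | a <- B1, b <- B2].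
Definition prodsp (F : fieldType) (n m : nat) (s1 : seq (mpoly F 'I_n))
  (s2 : seq (mpoly F 'I_m)) : seq (mpoly F ('I_n + 'I_m)%type) :=
  [seq mulp (polyl m f) (polyr n g) | f <- s1, g <- s2].

Definition combwt (n m k : nat) (wt1 : 'I_n -> 'I_k -> nat) (wt2 : 'I_m -> 'I_k -> nat)
  (w : ('I_n + 'I_m)%type -> nat) (v : ('I_n + 'I_m)%type) (c : 'I_k.+1) : nat :=
  match unlift ord_max c with
  | Some c' => match v with inl i => wt1 i c' | inr j => wt2 j c' end
  | None => w v
  end.

(* Main.v *)
Require Import Defs.
From HB Require Import structures.
From mathcomp Require Import all_boot all_order all_algebra.
From mathcomp Require Import zify mxtens.
Set Implicit Arguments. Unset Strict Implicit. Unset Printing Implicit Defensive.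
Import GRing.Theory.
Definition addw k (u v : {ffun 'I_k -> nat}) : {ffun 'I_k -> nat} := [ffun c => u c + v c].

Lemma lexltP k (u v : {ffun 'I_k -> nat}) :
  lexlt u v <-> exists i : 'I_k, u i < v i /\ forall j : 'I_k, j < i -> u j = v j.
Proof.
split.
  case/existsP => i /andP [h1 /forallP h2]; exists i; split => // j hj.
  by apply/eqP; have := h2 j; rewrite hj.
case=> i [h1 h2]; apply/existsP; exists i; rewrite h1 /=.
by apply/forallP => j; apply/implyP => hj; rewrite h2.
Qed.

Lemma lexlt_add k (u v u' v' : {ffun 'I_k -> nat}) :
  lexlt u v -> lexlt u' v' || (u' == v') -> lexlt (addw u u') (addw v v').
Proof.
move=> /lexltP [i [h1 h2]] /orP [/lexltP [i' [h1' h2']] | /eqP ->]; apply/lexltP.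
- case: (leqP i i') => hii.
    exists i; split.
      rewrite !ffunE; move: hii; rewrite leq_eqVlt => /orP [/eqP hv|hl].
        have e : i' = i by apply: val_inj.
        rewrite e in h1'; lia.
      rewrite h2' //; lia.
    move=> j hj; rewrite !ffunE h2 // h2' //; exact: (leq_trans hj hii).
  exists i'; split.
    rewrite !ffunE h2 //; lia.
  move=> j hj; rewrite !ffunE h2 ?h2' //; exact: (ltn_trans hj hii).
- exists i; split; first by rewrite !ffunE; lia.
  by move=> j hj; rewrite !ffunE h2.
Qed.

Definition fp k (U : {ffun 'I_k.+1 -> nat}) : {ffun 'I_k -> nat} :=
  [ffun c => U (lift ord_max c)].

Lemma lexlt_fp k (U V : {ffun 'I_k.+1 -> nat}) : lexlt (fp U) (fp V) -> lexlt U V.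
Proof.
move=> /lexltP [i [h1 h2]]; apply/lexltP; exists (lift ord_max i).
split; first by move: h1; rewrite !ffunE.
move=> j; rewrite lift_max => hj.
have hjk : j < k by exact: (ltn_trans hj (ltn_ord i)).
have -> : j = lift ord_max (Ordinal hjk) by apply: val_inj; exact: (esym (lift_max (Ordinal hjk))).
by have := h2 (Ordinal hjk) hj; rewrite !ffunE.
Qed.

Section W.
Variables (n m k : nat) (wt1 : 'I_n -> 'I_k -> nat) (wt2 : 'I_m -> 'I_k -> nat)
  (w : ('I_n + 'I_m)%type -> nat).

Lemma wt_max M : monwt (combwt wt1 wt2 w) M ord_max = monwt1 w M.
Proof.
rewrite ffunE /monwt1; apply: eq_bigr => x _.
by rewrite /combwt unlift_none.
Qed.

Lemma fp_wt a b : fp (monwt (combwt wt1 wt2 w) (monmul (monl m a) (monr n b))) =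
  addw (monwt wt1 a) (monwt wt2 b).
Proof.
apply/ffunP => c; rewrite !ffunE /monwt1 big_sumType /=; congr (_ + _).
  apply: eq_bigr => i _; rewrite !ffunE addn0 /combwt liftK //.
apply: eq_bigr => i _; rewrite !ffunE /combwt liftK //.
Qed.
End W.
Local Open Scope ring_scope.
Lemma nth_allpairs (S T U : Type) (f : S -> T -> U) (s : seq S) (t : seq T)
  x0 y0 d i j : (i < size s)%N -> (j < size t)%N ->
  nth d [seq f x y | x <- s, y <- t] (i * size t + j) = f (nth x0 s i) (nth y0 t j).
Proof.
elim: s i => [|x s IH] [|i] //= Hi Hj.
  by rewrite mul0n add0n nth_cat size_map Hj (nth_map y0).
rewrite nth_cat size_map mulSn -addnA ltnNge leq_addr /= addKn IH //.
Qed.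

Section P.
Variables (F : fieldType) (n m : nat).

Definition ml (M : mon ('I_n + 'I_m)%type) : mon 'I_n := [ffun i => M (inl i)].
Definition mr (M : mon ('I_n + 'I_m)%type) : mon 'I_m := [ffun j => M (inr j)].

Lemma mlr M : monmul (monl m (ml M)) (monr n (mr M)) = M.
Proof. by apply/ffunP => -[i|j]; rewrite !ffunE ?addn0. Qed.

Lemma ml_mul a b : ml (monmul (monl m a) (monr n b)) = a.
Proof. by apply/ffunP => i; rewrite !ffunE addn0. Qed.
Lemma mr_mul a b : mr (monmul (monl m a) (monr n b)) = b.
Proof. by apply/ffunP => i; rewrite !ffunE. Qed.

Lemma monmul_eq a b M :
  (monmul (monl m a) (monr n b) == M) = (a == ml M) && (b == mr M).
Proof.
apply/eqP/andP => [<-|[/eqP -> /eqP ->]]; last exact: mlr.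
by rewrite ml_mul mr_mul.
Qed.

Lemma coefE (X : finType) (p : mpoly F X) a :
  coef p a = \sum_(t <- p) (if t.2 == a then t.1 else 0).
Proof. by rewrite /coef big_mkcond. Qed.

Lemma coef_mulp (f : mpoly F 'I_n) (g : mpoly F 'I_m) M :
  coef (mulp (polyl m f) (polyr n g)) M = coef f (ml M) * coef g (mr M).
Proof.
rewrite !coefE; elim: f => [|t f IH]; first by rewrite !big_nil mul0r.
rewrite /= big_cat /= big_map IH big_cons mulrDl; congr (_ + _).
rewrite big_map big_distrr /=; apply: eq_bigr => u _ /=.
rewrite monmul_eq; case: (t.2 == ml M); case: (u.2 == mr M) => /=;
  by rewrite ?mulr0 ?mul0r.
Qed.

End P.
Section Q.
Variables (F : fieldType) (n m : nat) (s1 : seq (mpoly F 'I_n)) (s2 : seq (mpoly F 'I_m))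
  (B1 : seq (mon 'I_n)) (B2 : seq (mon 'I_m)).

Lemma eS : size (prodsp s1 s2) = (size s1 * size s2)%N.
Proof. exact: size_allpairs. Qed.
Lemma eB : size (prodB B1 B2) = (size B1 * size B2)%N.
Proof. exact: size_allpairs. Qed.

Lemma coef_prod (j : nat) M : (j < size s1 * size s2)%N ->
  coef (nth [::] (prodsp s1 s2) j) M =
  coef (nth [::] s1 (j %/ size s2)) (ml M) * coef (nth [::] s2 (j %% size s2)) (mr M).
Proof.
move=> hj.
have p2 : (0 < size s2)%N by case: (size s2) hj => //; rewrite muln0.
rewrite {1}(divn_eq j (size s2)) /prodsp (nth_allpairs _ [::] [::]).
- exact: coef_mulp.
- by rewrite ltn_divLR.
- by rewrite ltn_mod.
Qed.

Lemma nth_prodB (i : nat) : (i < size B1 * size B2)%N ->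
  nth (mon1 _) (prodB B1 B2) i =
  monmul (monl m (nth (mon1 _) B1 (i %/ size B2))) (monr n (nth (mon1 _) B2 (i %% size B2))).
Proof.
move=> hj.
have p2 : (0 < size B2)%N by case: (size B2) hj => //; rewrite muln0.
rewrite {1}(divn_eq i (size B2)) /prodB (nth_allpairs _ (mon1 _) (mon1 _)) //.
- by rewrite ltn_divLR.
- by rewrite ltn_mod.
Qed.

Lemma colv_prod M : colv (prodsp s1 s2) M =
  castmx (erefl 1%N, esym eS) (colv s1 (ml M) *t colv s2 (mr M)).
Proof.
apply/rowP => j; rewrite castmxE /tensmx !mxE.
rewrite coef_prod; last by rewrite -eS.
by [].
Qed.

Lemma Bmx_prod : Bmx (prodsp s1 s2) (prodB B1 B2) =
  castmx (esym eB, esym eS) (Bmx s1 B1 *t Bmx s2 B2).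
Proof.
apply/matrixP => i j; rewrite castmxE /tensmx !mxE.
rewrite coef_prod; last by rewrite -eS.
rewrite nth_prodB; last by rewrite -eB.
by rewrite ml_mul mr_mul.
Qed.
End Q.
Lemma tens11 (R : comNzRingType) p q :
  (1%:M : 'M[R]_p) *t (1%:M : 'M[R]_q) = 1%:M.
Proof.
apply/matrixP => i j.
case: (mxtens_indexP i) => i1 i2; case: (mxtens_indexP j) => j1 j2.
rewrite tensmxE !mxE (inj_eq (can_inj (@mxtens_indexK _ _))) xpair_eqE.
by case: (i1 == j1); case: (i2 == j2); rewrite /= ?mulr1 ?mulr0 ?mul0r.
Qed.

Lemma row_free_tens (R : fieldType) p1 q1 p2 q2 (A : 'M[R]_(p1, q1)) (B : 'M[R]_(p2, q2)) :
  row_free A -> row_free B -> row_free (A *t B).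
Proof.
move=> /row_freeP [C hC] /row_freeP [D hD]; apply/row_freeP.
by exists (C *t D); rewrite tensmx_mul hC hD tens11.
Qed.

Lemma castmul (R : fieldType) p p' q q' (e1 : p = p') (e2 : q = q')
  (X : 'M[R]_(1, p)) (T : 'M[R]_(p, q)) :
  castmx (erefl 1%N, e2) (X *m T) = castmx (erefl 1%N, e1) X *m castmx (e1, e2) T.
Proof. by case: p' / e1; case: q' / e2. Qed.

Lemma below_of (F : fieldType) (X : finType) (k : nat) (wt : X -> 'I_k -> nat)
  (s : seq (mpoly F X)) (B : seq (mon X)) u (x : 'rV[F]_(size B)) :
  (forall i, x 0 i != 0 -> lexlt (monwt wt (nth (mon1 X) B i)) u) ->
  (x *m Bmx s B <= Bmx_below wt s B u)%MS.
Proof.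
move=> hx.
suff -> : x *m Bmx s B = x *m Bmx_below wt s B u by exact: submxMl.
apply/rowP => j; rewrite !mxE; apply: eq_bigr => i _.
have [->|/hx hl] := eqVneq (x 0 i) 0; first by rewrite !mul0r.
idtac.
rewrite !mxE; case: ifP => [_|hf]; [by rewrite mxE | by rewrite hf in hl].
Qed.

Definition cond (X : finType) (k : nat) (wt : X -> 'I_k -> nat) (B : seq (mon X)) a i :=
  lexlt (monwt wt (nth (mon1 X) B i)) (monwt wt a) || (nth (mon1 X) B i == a).

Lemma biwa_dec (F : fieldType) (X : finType) (k : nat) (wt : X -> 'I_k -> nat)
  (s : seq (mpoly F X)) (B : seq (mon X)) :
  isBIWA s wt B -> forall a, exists x : 'rV[F]_(size B),
    colv s a = x *m Bmx s B /\ forall i, x 0 i != 0 -> cond wt B a i.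
Proof.
case=> _ _ _ hb a.
case: (boolP (a \in B)) => aB.
  have hi : (index a B < size B)%N by rewrite index_mem.
  exists (delta_mx 0 (Ordinal hi)); split.
    rewrite -rowE; apply/rowP => j; rewrite !mxE /=.
    by rewrite nth_index.
  move=> i; rewrite mxE /= => hne; apply/orP; right.
  have /eqP -> : i == Ordinal hi by move: hne; case: (i == Ordinal hi); rewrite ?eqxx.
  by rewrite /= nth_index.
have /submxP [x hx] := hb a aB.
exists (\row_i (if lexlt (monwt wt (nth (mon1 X) B i)) (monwt wt a) then x 0 i else 0)).
split.
  rewrite hx; apply/rowP => j; rewrite !mxE; apply: eq_bigr => i _.
  rewrite !mxE; case: ifP => _; by rewrite !mxE ?mul0r ?mulr0.
move=> i; rewrite mxE; case: ifP => h; last by rewrite eqxx.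
by rewrite /cond h.
Qed.
Lemma row_free_cast2 (R : fieldType) p p' q q' (e1 : p = p') (e2 : q = q') (A : 'M[R]_(p, q)) :
  row_free (castmx (e1, e2) A) = row_free A.
Proof. by case: p' / e1; case: q' / e2; rewrite castmx_id. Qed.

Lemma addwC k (u v : {ffun 'I_k -> nat}) : addw u v = addw v u.
Proof. by apply/ffunP => c; rewrite !ffunE addnC. Qed.

Lemma prod_dec (F : fieldType) (n m k : nat)
  (s1 : seq (mpoly F 'I_n)) (s2 : seq (mpoly F 'I_m))
  (wt1 : 'I_n -> 'I_k -> nat) (wt2 : 'I_m -> 'I_k -> nat)
  (B1 : seq (mon 'I_n)) (B2 : seq (mon 'I_m)) :
  isBIWA s1 wt1 B1 -> isBIWA s2 wt2 B2 -> forall M,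
  exists x : 'rV[F]_(size (prodB B1 B2)),
    colv (prodsp s1 s2) M = x *m Bmx (prodsp s1 s2) (prodB B1 B2) /\
    forall i : 'I_(size (prodB B1 B2)), x 0 i != 0 ->
      cond wt1 B1 (ml M) (i %/ size B2)%N && cond wt2 B2 (mr M) (i %% size B2)%N.
Proof.
move=> h1 h2 M.
have [x1 [hx1 c1]] := biwa_dec h1 (ml M).
have [x2 [hx2 c2]] := biwa_dec h2 (mr M).
exists (castmx (erefl 1%N, esym (eB B1 B2)) (x1 *t x2)); split.
  rewrite colv_prod hx1 hx2 -tensmx_mul Bmx_prod.
  exact: castmul.
move=> i; rewrite castmxE /tensmx !mxE => hne.
move: hne; rewrite mulf_eq0 negb_or => /andP [ne1 ne2].
rewrite [X in x1 X _]ord1 in ne1; rewrite [X in x2 X _]ord1 in ne2.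
by rewrite (c1 _ ne1) (c2 _ ne2).
Qed.

Theorem lemma5p4 (F : fieldType) (n m k : nat)
  (s1 : seq (mpoly F 'I_n)) (s2 : seq (mpoly F 'I_m))
  (wt1 : 'I_n -> 'I_k -> nat) (wt2 : 'I_m -> 'I_k -> nat)
  (B1 : seq (mon 'I_n)) (B2 : seq (mon 'I_m))
  (w : ('I_n + 'I_m)%type -> nat) :
  isBIWA s1 wt1 B1 -> isBIWA s2 wt2 B2 -> separates w (prodB B1 B2) ->
  isBIWA (prodsp s1 s2) (combwt wt1 wt2 w) (prodB B1 B2).
Proof.
move=> h1 h2 hsep.
have hd := prod_dec h1 h2.
case: (h1) => rf1 _ _ _; case: (h2) => rf2 _ _ _.
split.
- by rewrite Bmx_prod row_free_cast2; apply: row_free_tens.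
- move=> M; have [x [-> _]] := hd M; exact: submxMl.
- move=> b1 b2 hb1 hb2 he; apply: hsep => //.
  by rewrite -!(wt_max wt1 wt2) he.
- move=> M hM; have [x [-> hx]] := hd M.
  apply: below_of => i /hx /andP [ca cb].
  have hi : (i < size B1 * size B2)%N by rewrite -(eB B1 B2).
  have hin := mem_nth (mon1 _) (ltn_ord i).
  rewrite nth_prodB // in hin *.
  rewrite -(mlr M); apply: lexlt_fp; rewrite !fp_wt.
  move: ca cb; rewrite /cond.
  set a' := nth _ B1 _; set b' := nth _ B2 _.
  case: (eqVneq a' (ml M)) => [ea|na].
    move=> _ /orP [lb|/eqP eb].
      by rewrite addwC [addw (monwt wt1 _) _]addwC; apply: lexlt_add => //; rewrite ea eqxx orbT.
    by move: hin; rewrite -/a' -/b' ea eb mlr (negbTE hM).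
  rewrite orbF => la cb; apply: (lexlt_add la).
  by case/orP: cb => [->//|/eqP ->]; rewrite eqxx orbT.
Qed.
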